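(* In the static load balancing game described in the context, fix a player $i$ and the actions $a_{-i}$ of the other players. Suppose the servers are labeled so that $\hat{\mu}_{i1}\ge \hat{\mu}_{i2}\ge\cdots\ge\hat{\mu}_{im}$. Then the optimal solution of the convex program $$\min_{a_i}\ D_i(a)\quad\text{s.t.}\quad \sum_{j=1}^m a_{ij}=1,\ a_{ij}\ge 0\ \ \forall j\in[m]$$ is given by $$a_{ij}=\begin{cases}\dfrac{\mu_j}{\lambda_i}\left(\dfrac{\lambda_i+\sum_{k=1}^{c_i-1}\frac{\mu_k}{\hat{\mu}_{ik}}}{\sum_{k=1}^{c_i-1}\mu_k}-\dfrac{1}{\hat{\mu}_{ij}}\right), & 1\le j<c_i,\\[2mm] 0, & c_i\le j\le m,\end{cases}$$ where $c_i$ is the smallest integer index satisfying $$\hat{\mu}_{ic_i}\left(\lambda_i+\sum_{k=1}^{c_i-1}\frac{\mu_k}{\hat{\mu}_{ik}}\right)\le \sum_{k=1}^{c_i-1}\mu_k,$$ with $c_i=m+1$ if no index in $\{1,\dots,m\}$ satisfies this inequality.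
   Context: Static load balancing game: there are $m$ servers with service rates $\mu_j>0$ and initial loads $s_j^0\ge0$, and $n$ players; player $i$ holds a job of length $\lambda_i>0$. Player $i$'s action is $a_i=(a_{i1},\dots,a_{im})$ in the probability simplex, $a_{ij}$ being the fraction of job $i$ placed on server $j$. The cost of player $i$ under profile $a$ is $$D_i(a)=\sum_{j=1}^m \lambda_i a_{ij}\left(\frac{\lambda_i a_{ij}}{2\mu_j}+\frac{s_j^0+\sum_{k\neq i}\lambda_k a_{kj}}{\mu_j}\right).$$ The relative available processing rate of server $j$ as viewed by player $i$ is $\hat{\mu}_{ij}=\dfrac{\mu_j}{s_j^0+\sum_{k\ne i}\lambda_k a_{kj}}$ (taken to be $+\infty$ when the denominator is $0$, in which case $1/\hat{\mu}_{ij}=0$). *)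

(* Defs.v *)
(* extended reals from mathcomp-analysis' constructive_ereal
   are used only to represent hat-mu, which may be +oo. *)
From HB Require Import structures.
From mathcomp Require Import all_boot all_order all_algebra.
From mathcomp Require Import constructive_ereal.
Set Implicit Arguments. Unset Strict Implicit. Unset Printing Implicit Defensive.
Import Order.TTheory GRing.Theory Num.Theory.
Local Open Scope ring_scope.

(* Servers are 'I_m (0-based), players are 'I_n.
   mu j : service rate, s j : initial load s_j^0, lam k : job length,
   a k j : fraction of job k on server j (profile). *)

Definition others_load (R : realFieldType) (n m : nat)
  (lam : 'I_n -> R) (s : 'I_m -> R) (a : 'I_n -> 'I_m -> R) (i : 'I_n)
  (j : 'I_m) : R :=
  s j + \sum_(k < n | k != i) lam k * a k j.

(* 1 / hat-mu_{ij}  (= 0 when the denominator of hat-mu is 0) *)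
Definition inv_hat_mu (R : realFieldType) (n m : nat)
  (lam : 'I_n -> R) (mu s : 'I_m -> R) (a : 'I_n -> 'I_m -> R) (i : 'I_n)
  (j : 'I_m) : R :=
  others_load lam s a i j / mu j.

Definition hat_mu (R : realFieldType) (n m : nat)
  (lam : 'I_n -> R) (mu s : 'I_m -> R) (a : 'I_n -> 'I_m -> R) (i : 'I_n)
  (j : 'I_m) : \bar R :=
  if others_load lam s a i j == 0 then +oo%E
  else (mu j / others_load lam s a i j)%:E.

(* D_i(a) where player i uses action b and the others use a *)
Definition cost (R : realFieldType) (n m : nat)
  (lam : 'I_n -> R) (mu s : 'I_m -> R) (a : 'I_n -> 'I_m -> R) (i : 'I_n)
  (b : 'I_m -> R) : R :=
  \sum_(j < m) lam i * b j *
     (lam i * b j / (2 * mu j) + others_load lam s a i j / mu j).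

Definition in_simplex (R : realFieldType) (m : nat) (b : 'I_m -> R) : Prop :=
  (forall j, 0 <= b j) /\ \sum_(j < m) b j = 1.

Definition threshold_cond (R : realFieldType) (n m : nat)
  (lam : 'I_n -> R) (mu s : 'I_m -> R) (a : 'I_n -> 'I_m -> R) (i : 'I_n)
  (c : 'I_m) : Prop :=
  (hat_mu lam mu s a i c *
     (lam i + \sum_(k < m | (k < c)%N) mu k * inv_hat_mu lam mu s a i k)%:E
   <= (\sum_(k < m | (k < c)%N) mu k)%:E)%E.

(* The closed-form best response, with c the 0-based version of c_i - 1
   (servers j with j < c get positive share). *)
Definition best_response (R : realFieldType) (n m : nat)
  (lam : 'I_n -> R) (mu s : 'I_m -> R) (a : 'I_n -> 'I_m -> R) (i : 'I_n)
  (c : nat) (j : 'I_m) : R :=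
  if (j < c)%N then
    mu j / lam i *
      ((lam i + \sum_(k < m | (k < c)%N) mu k * inv_hat_mu lam mu s a i k)
         / (\sum_(k < m | (k < c)%N) mu k)
       - inv_hat_mu lam mu s a i j)
  else 0.

(* Main.v *)
Require Import Defs.
From HB Require Import structures.
From mathcomp Require Import all_boot all_order all_algebra.
From mathcomp Require Import constructive_ereal ring lra.
From Stdlib Require Import FunctionalExtensionality.
Import Order.TTheory GRing.Theory Num.Theory.
Local Open Scope ring_scope.

Lemma key_ineq (R : realFieldType) (l mu x T u t : R) : 0 < l -> 0 < mu ->
  (u = mu / l * (T - x)) \/ (u = 0 /\ T <= x /\ 0 <= t) ->
  l * u * (l * u / (2 * mu) + x) + l * T * (t - u) + l ^+ 2 * (t - u) ^+ 2 / (2 * mu)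
  <= l * t * (l * t / (2 * mu) + x).
Proof.
move=> l0 mu0 [->|[-> [Tx t0]]].
  rewrite le_eqVlt; apply/orP; left; apply/eqP; field.
  by rewrite !lt0r_neq0.
rewrite -subr_ge0.
have -> : l * t * (l * t / (2 * mu) + x) -
  (l * 0 * (l * 0 / (2 * mu) + x) + l * T * (t - 0) + l ^+ 2 * (t - 0) ^+ 2 / (2 * mu))
  = l * t * (x - T).
  field; by rewrite lt0r_neq0.
by rewrite mulr_ge0 ?mulr_ge0 ?subr_ge0 // ltW.
Qed.

Lemma cond_gen (R : realFieldType) (L mu A M : R) : 0 <= L -> 0 < mu -> 0 < A ->
  (((if L == 0%R then +oo else (mu / L)%:E) * A%:E <= M%:E)%E <-> A <= L / mu * M).
Proof.
move=> L0 mu0 A0; case: eqP => [->|/eqP LN].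
  rewrite gt0_mulye ?lte_fin // leye_eq /= mul0r mul0r; split=> // H.
  by have := lt_le_trans A0 H; rewrite ltxx.
have Lp : 0 < L by rewrite lt_def LN.
rewrite -EFinM lee_fin.
have -> : mu / L * A = A / (L / mu) by field; rewrite !lt0r_neq0.
by rewrite ler_pdivrMr ?divr_gt0 // mulrC.
Qed.

Lemma load_ge0 (R : realFieldType) (n m : nat)
  (mu s : 'I_m -> R) (lam : 'I_n -> R) (a : 'I_n -> 'I_m -> R) (i : 'I_n) j :
  (forall j, 0 <= s j) ->
  (forall k, 0 < lam k) ->
  (forall k, k != i -> in_simplex (a k)) -> 0 <= others_load lam s a i j.
Proof.
move=> hs hl ha; rewrite /others_load addr_ge0 // sumr_ge0 // => k ki.
by apply: mulr_ge0; [exact: ltW | exact: (ha k ki).1].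
Qed.

Lemma x_mono (R : realFieldType) (n m : nat)
  (mu s : 'I_m -> R) (lam : 'I_n -> R) (a : 'I_n -> 'I_m -> R) (i : 'I_n) (j1 j2 : 'I_m) :
  (forall j, 0 < mu j) ->
  (forall j, 0 <= others_load lam s a i j) ->
  (hat_mu lam mu s a i j2 <= hat_mu lam mu s a i j1)%E ->
  inv_hat_mu lam mu s a i j1 <= inv_hat_mu lam mu s a i j2.
Proof.
move=> hmu hL; rewrite /hat_mu /inv_hat_mu.
case: (eqVneq (others_load lam s a i j2) 0) => [->|N2].
  case: (eqVneq (others_load lam s a i j1) 0) => [->|N1].
    by rewrite !mul0r.
  by rewrite leye_eq.

case: (eqVneq (others_load lam s a i j1) 0) => [->|N1].
  by move=> _; rewrite mul0r divr_ge0 // ltW.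
rewrite lee_fin => H.
have p1 : 0 < others_load lam s a i j1 by rewrite lt_def N1 hL.
have p2 : 0 < others_load lam s a i j2 by rewrite lt_def N2 hL.
rewrite -[X in X <= _]invf_div -[X in _ <= X]invf_div lef_pV2 // posrE divr_gt0 //.
Qed.
Theorem lemma1 (R : realFieldType) (n m : nat)
  (mu s : 'I_m -> R) (lam : 'I_n -> R) (a : 'I_n -> 'I_m -> R) (i : 'I_n)
  (c : nat) :
  (0 < m)%N ->
  (forall j, 0 < mu j) ->
  (forall j, 0 <= s j) ->
  (forall k, 0 < lam k) ->
  (forall k, k != i -> in_simplex (a k)) ->
  (* servers labeled so that hat-mu_{i1} >= ... >= hat-mu_{im} *)
  (forall j1 j2 : 'I_m, (j1 <= j2)%N ->
     (hat_mu lam mu s a i j2 <= hat_mu lam mu s a i j1)%E) ->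
  (* c (0-based, in 0..m) is the smallest index satisfying the threshold
     inequality, or m if none does *)
  (c <= m)%N ->
  (forall j : 'I_m, (j < c)%N -> ~ threshold_cond lam mu s a i j) ->
  (forall j : 'I_m, nat_of_ord j = c -> threshold_cond lam mu s a i j) ->
  (* the closed form is the (unique) optimal solution *)
  in_simplex (best_response lam mu s a i c) /\
  (forall b, in_simplex b ->
     cost lam mu s a i (best_response lam mu s a i c) <= cost lam mu s a i b) /\
  (forall b, in_simplex b ->
     cost lam mu s a i b <= cost lam mu s a i (best_response lam mu s a i c) ->
     b = best_response lam mu s a i c).
Proof.
move=> m0 hmu hs hl ha hord cm hnc hc.
have hL : forall j, 0 <= others_load lam s a i j.
  by move=> j; apply: load_ge0.
set x := inv_hat_mu lam mu s a i.
have x0 : forall j, 0 <= x j by move=> j; rewrite /x /inv_hat_mu divr_ge0 // ltW.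
have xm : forall j1 j2 : 'I_m, (j1 <= j2)%N -> x j1 <= x j2.
  by move=> j1 j2 h; apply: x_mono => //; apply: hord.
set S := fun c : nat => \sum_(k < m | (k < c)%N) mu k * x k.
set M := fun c : nat => \sum_(k < m | (k < c)%N) mu k.
have S0 : forall c, 0 <= S c.
  by move=> c0; rewrite /S sumr_ge0 // => k _; rewrite mulr_ge0 // ltW.
have condE : forall j : 'I_m, threshold_cond lam mu s a i j <-> lam i + S j <= x j * M j.
  move=> j; rewrite /threshold_cond /hat_mu; apply: cond_gen => //.
  by apply: (lt_le_trans (hl i)); rewrite lerDl; apply: S0.
have [c' ec] : exists c', c = c'.+1.
  case: c cm hnc hc => [|c'] cm hnc hc; last by exists c'.
  have := hc (Ordinal m0) erefl; rewrite condE /S /M /= !big_pred0 // mulr0 addr0.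
  by have := hl i; lra.
subst c.
have c'm : (c' < m)%N by [].
pose c1 : 'I_m := Ordinal c'm.
have split : forall F : 'I_m -> R,
    \sum_(k < m | (k < c'.+1)%N) F k = F c1 + \sum_(k < m | (k < c')%N) F k.
  move=> F; rewrite (bigD1 c1) //=; congr (_ + _); apply: eq_bigl => k /=.
  by rewrite ltnS [(k < c')%N]ltn_neqAle andbC -val_eqE.
have nc1 : x c1 * M c' < lam i + S c'.
  rewrite ltNge; apply/negP => h; apply: (hnc c1) => //; exact/condE.
have Mp : 0 < M c'.+1.
  rewrite /M split.
  have : 0 <= \sum_(k < m | (k < c')%N) mu k by rewrite sumr_ge0 // => k _; rewrite ltW.
  by have := hmu c1; lra.
set T := (lam i + S c'.+1) / M c'.+1.
have xc1T : x c1 < T.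
  rewrite /T ltr_pdivlMr // /S /M !split mulrDr -/(S c') -/(M c').
  by have := nc1; lra.
have lowT : forall j : 'I_m, (j < c'.+1)%N -> x j < T.
  by move=> j hj; apply: le_lt_trans xc1T; apply: xm.
have upT : forall j : 'I_m, (c'.+1 <= j)%N -> T <= x j.
  move=> j hj; have cc : (c'.+1 < m)%N by apply: leq_ltn_trans hj _.
  have := hc (Ordinal cc) erefl; rewrite condE /= -ler_pdivrMr // => h.
  by apply: (le_trans h); apply: xm.
set br := best_response lam mu s a i c'.+1.
have brE : forall j, br j = if (j < c'.+1)%N then mu j / lam i * (T - x j) else 0.
  by [].
have lam0 : lam i != 0 by rewrite lt0r_neq0.
have br0 : forall j, 0 <= br j.
  move=> j; rewrite brE; case: ifP => h //.
  by rewrite mulr_ge0 ?divr_ge0 ?subr_ge0 ?ltW ?lowT.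
have br1 : \sum_(j < m) br j = 1.
  rewrite (eq_bigr _ (fun j _ => brE j)) -big_mkcond /=.
  have -> : \sum_(j < m | (j < c'.+1)%N) mu j / lam i * (T - x j)
      = (T * M c'.+1 - S c'.+1) / lam i.
    rewrite /M /S mulr_sumr -sumrB mulr_suml; apply: eq_bigr => j _.
    by field.
  rewrite /T; field; rewrite lam0 /= lt0r_neq0 //.
pose q (b : 'I_m -> R) j := lam i ^+ 2 * (b j - br j) ^+ 2 / (2 * mu j).
have q0 : forall b j, 0 <= q b j.
  move=> b j; rewrite /q; apply: divr_ge0; first by apply: mulr_ge0; apply: sqr_ge0.
  by apply: mulr_ge0; [rewrite ler0n | apply: ltW].
have H : forall b, in_simplex b -> cost lam mu s a i br + \sum_j q b j <= cost lam mu s a i b.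
  move=> b [b0 b1].
  have : \sum_(j < m) (lam i * br j * (lam i * br j / (2 * mu j) + x j)
      + lam i * T * (b j - br j) + q b j)
      <= \sum_(j < m) lam i * b j * (lam i * b j / (2 * mu j) + x j).
    apply: ler_sum => j _; apply: key_ineq => //.
    rewrite brE; case: ifP => h; [left | right] => //.
    by split => //; split; [apply: upT; rewrite leqNgt h | apply: b0].
  rewrite !big_split /= -mulr_sumr sumrB b1 br1 subrr mulr0 addr0.
  by [].
split; first by split.
split.
  move=> b hb; apply: le_trans (H b hb).
  by rewrite lerDl sumr_ge0.
move=> b hb hle.
have hs0 : \sum_j q b j = 0.
  apply/eqP; rewrite eq_le sumr_ge0 // andbT.
  by have := H b hb; lra.
apply: functional_extensionality => j.
have hq : q b j = 0.
  by apply: (psumr_eq0P (P := predT) (fun j _ => q0 b j) hs0).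
move: hq; rewrite /q; move/eqP.
rewrite mulf_eq0 invr_eq0 mulf_eq0 sqrf_eq0 sqrf_eq0 (negbTE lam0) /=.
rewrite mulf_eq0 pnatr_eq0 /= (negbTE (lt0r_neq0 (hmu j))) subr_eq0 orbF.
by move/eqP.
Qed.
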